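(* The assignment $\mathbf{I}:\underline{\mathrm{G}}\to\underline{\mathrm{IN}}$ sending a globally hyperbolic poset $(X,\le)$ to $(\mathbf{I}X,\mathrm{left},\mathrm{right})$, and a morphism $f:X\to Y$ to $\bar f:\mathbf{I}X\to\mathbf{I}Y$, $\bar f([a,b])=[f(a),f(b)]$, is a functor.
   Context: Order notions: directed/filtered sets, suprema $\bigsqcup$, infima $\bigwedge$, the way-below relation $x\ll y$ (for every directed $S$ with a supremum, $y\sqsubseteq\bigsqcup S$ implies $x\sqsubseteq s$ for some $s\in S$), $\Uparrow x=\{a:x\ll a\}$, $\Downarrow x=\{a:a\ll x\}$; a poset is continuous if some subset $B$ has $B\cap\Downarrow x$ containing a directed set with supremum $x$ for every $x$; a continuous dcpo additionally has suprema of all directed sets; $\max(D)$ is the set of maximal elements; the Scott topology consists of upper sets $U$ with $\bigsqcup S\in U\Rightarrow S\cap U\neq\emptyset$ for directed $S$. A continuous poset is bicontinuous if (1) $x\ll y$ iff for every filtered $S$ with an infimum, $\bigwedge S\sqsubseteq x$ implies $s\sqsubseteq y$ for some $s\in S$, and (2) each $\Uparrow x$ is filtered with infimum $x$; its interval topology has basis $\{z: a\ll z\ll b\}$. A globally hyperbolic poset is a bicontinuous poset $(X,\le)$ whose closed intervals $[a,b]=\{z:a\le z\le b\}$ are compact in the interval topology. $\underline{\mathrm{G}}$ is the category whose objects are globally hyperbolic posets and whose arrows are monotone maps continuous for the interval topologies. For such $X$, $\mathbf{I}X=\{[a,b]: a\le b\}$ ordered by reverse inclusion, with $\mathrm{left}([a,b])=[a,a]$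 and $\mathrm{right}([a,b])=[b,b]$. An interval poset is a poset $D$ with maps $\mathrm{left},\mathrm{right}:D\to\max(D)$ such that (writing $\sqcap$ for binary infimum, assumed to exist only where named) $x=\mathrm{left}(x)\sqcap\mathrm{right}(x)$; if $\mathrm{right}(x)=\mathrm{left}(y)$ then $\mathrm{left}(x\sqcap y)=\mathrm{left}(x)$, $\mathrm{right}(x\sqcap y)=\mathrm{right}(y)$; and for $p\in\max(D)$ with $x\sqsubseteq p$, $\mathrm{left}(\mathrm{left}(x)\sqcap p)=\mathrm{left}(x)$, $\mathrm{right}(\mathrm{left}(x)\sqcap p)=p$, $\mathrm{left}(p\sqcap\mathrm{right}(x))=p$, $\mathrm{right}(p\sqcap\mathrm{right}(x))=\mathrm{right}(x)$. Define $a\le b$ on $\max(D)$ iff $a=\mathrm{left}(z),b=\mathrm{right}(z)$ for some $z$; let $[p,\cdot]=\mathrm{left}^{-1}(p)$, $[\cdot,q]=\mathrm{right}^{-1}(q)$. An interval domain is an interval poset with $D$ a continuous dcpo such that: (i) if $p\in\Uparrow x\cap\max(D)$ then $\Uparrow(\mathrm{left}(x)\sqcap p)$ and $\Uparrow(p\sqcap\mathrm{right}(x))$ are nonempty; (ii) for each $x$, TFAE: $\Uparrow x\neq\emptyset$; for all $y\in[\mathrm{left}(x),\cdot]$ with $y\sqsubseteq x$, $y\ll\mathrm{right}(y)$ in the subposet $[\cdot,\mathrm{right}(y)]$; for all $y\in[\cdot,\mathrm{right}(x)]$ with $y\sqsubseteq x$, $y\ll\mathrm{left}(y)$ in the subposet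 $[\mathrm{left}(y),\cdot]$; (iii) for directed $S\subseteq[p,\cdot]$, $\mathrm{left}(\bigsqcup S)=p$ and $\mathrm{right}(\bigsqcup S)=\mathrm{right}(\bigsqcup T)$ for every directed $T\subseteq[q,\cdot]$ with $\mathrm{right}(T)=\mathrm{right}(S)$, and dually for directed $S\subseteq[\cdot,q]$, $\mathrm{right}(\bigsqcup S)=q$ and $\mathrm{left}(\bigsqcup S)=\mathrm{left}(\bigsqcup T)$ for every directed $T\subseteq[\cdot,p]$ with $\mathrm{left}(T)=\mathrm{left}(S)$; (iv) each $\{y\in\max(D):x\sqsubseteq y\}$ is Scott compact. $\underline{\mathrm{IN}}$ is the category of interval domains with arrows the Scott continuous maps $f:D\to E$ satisfying $f\circ\mathrm{left}_D=\mathrm{left}_E\circ f$ and $f\circ\mathrm{right}_D=\mathrm{right}_E\circ f$. *)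

(* Defs.v *)
From Stdlib Require Import List.

Definition is_partial_order {T : Type} (le : T -> T -> Prop) : Prop :=
  (forall x, le x x) /\
  (forall x y, le x y -> le y x -> x = y) /\
  (forall x y z, le x y -> le y z -> le x z).

Definition upper_bound {T : Type} (le : T -> T -> Prop) (S : T -> Prop) (u : T) : Prop :=
  forall s, S s -> le s u.
Definition lower_bound {T : Type} (le : T -> T -> Prop) (S : T -> Prop) (u : T) : Prop :=
  forall s, S s -> le u s.

Definition is_sup {T : Type} (le : T -> T -> Prop) (S : T -> Prop) (s : T) : Prop :=
  upper_bound le S s /\ (forall u, upper_bound le S u -> le s u).
Definition is_inf {T : Type} (le : T -> T -> Prop) (S : T -> Prop) (i : T) : Prop :=
  lower_bound le S i /\ (forall u, lower_bound le S u -> le u i).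
Definition is_inf2 {T : Type} (le : T -> T -> Prop) (a b m : T) : Prop :=
  is_inf le (fun z => z = a \/ z = b) m.

Definition directed {T : Type} (le : T -> T -> Prop) (S : T -> Prop) : Prop :=
  (exists x, S x) /\
  (forall x y, S x -> S y -> exists z, S z /\ le x z /\ le y z).
Definition filtered {T : Type} (le : T -> T -> Prop) (S : T -> Prop) : Prop :=
  (exists x, S x) /\
  (forall x y, S x -> S y -> exists z, S z /\ le z x /\ le z y).

Definition way_below {T : Type} (le : T -> T -> Prop) (x y : T) : Prop :=
  forall S, directed le S -> forall s, is_sup le S s -> le y s ->
    exists t, S t /\ le x t.

Definition way_below_in {T : Type} (le : T -> T -> Prop) (P : T -> Prop) (x y : T) : Prop :=
  forall S, (forall z, S z -> P z) -> directed le S ->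
    forall s, P s ->
      (upper_bound le S s /\ (forall u, P u -> upper_bound le S u -> le s u)) ->
      le y s -> exists t, S t /\ le x t.

Definition maximal {T : Type} (le : T -> T -> Prop) (p : T) : Prop :=
  forall y, le p y -> y = p.

Definition continuous_poset {T : Type} (le : T -> T -> Prop) : Prop :=
  is_partial_order le /\
  exists B : T -> Prop, forall x, exists S : T -> Prop,
    (forall s, S s -> B s /\ way_below le s x) /\ directed le S /\ is_sup le S x.

Definition dcpo {T : Type} (le : T -> T -> Prop) : Prop :=
  forall S, directed le S -> exists s, is_sup le S s.

Definition continuous_dcpo {T : Type} (le : T -> T -> Prop) : Prop :=
  continuous_poset le /\ dcpo le.

Definition bicontinuous {T : Type} (le : T -> T -> Prop) : Prop :=
  continuous_poset le /\
  (forall x y, way_below le x y <->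
     (forall S, filtered le S -> forall i, is_inf le S i -> le i x ->
        exists s, S s /\ le s y)) /\
  (forall x, filtered le (fun a => way_below le x a) /\
             is_inf le (fun a => way_below le x a) x).

Definition compact_in {T : Type} (is_open : (T -> Prop) -> Prop) (K : T -> Prop) : Prop :=
  forall (I : Type) (U : I -> T -> Prop),
    (forall i, is_open (U i)) ->
    (forall x, K x -> exists i, U i x) ->
    exists l : list I, forall x, K x -> exists i, In i l /\ U i x.

Definition interval_basic {T : Type} (le : T -> T -> Prop) (a b : T) : T -> Prop :=
  fun z => way_below le a z /\ way_below le z b.
Definition interval_open {T : Type} (le : T -> T -> Prop) (U : T -> Prop) : Prop :=
  forall x, U x -> exists a b, interval_basic le a b x /\
    (forall z, interval_basic le a b z -> U z).

Definition closed_interval {T : Type} (le : T -> T -> Prop) (a b : T) : T -> Prop :=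
  fun z => le a z /\ le z b.

Definition globally_hyperbolic {T : Type} (le : T -> T -> Prop) : Prop :=
  bicontinuous le /\
  forall a b, compact_in (interval_open le) (closed_interval le a b).

Definition monotone {X Y : Type} (leX : X -> X -> Prop) (leY : Y -> Y -> Prop)
  (f : X -> Y) : Prop := forall a b, leX a b -> leY (f a) (f b).

Definition interval_continuous {X Y : Type} (leX : X -> X -> Prop) (leY : Y -> Y -> Prop)
  (f : X -> Y) : Prop :=
  forall U, interval_open leY U -> interval_open leX (fun x => U (f x)).

Definition scott_open {T : Type} (le : T -> T -> Prop) (U : T -> Prop) : Prop :=
  (forall x y, U x -> le x y -> U y) /\
  (forall S s, directed le S -> is_sup le S s -> U s -> exists t, S t /\ U t).
Definition scott_compact {T : Type} (le : T -> T -> Prop) (K : T -> Prop) : Prop :=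
  compact_in (scott_open le) K.
Definition scott_continuous {D E : Type} (leD : D -> D -> Prop) (leE : E -> E -> Prop)
  (f : D -> E) : Prop :=
  forall U, scott_open leE U -> scott_open leD (fun x => U (f x)).

Definition interval_poset {D : Type} (le : D -> D -> Prop) (left right : D -> D) : Prop :=
  is_partial_order le /\
  (forall x, maximal le (left x) /\ maximal le (right x)) /\
  (forall x, is_inf2 le (left x) (right x) x) /\
  (forall x y, right x = left y ->
     exists m, is_inf2 le x y m /\ left m = left x /\ right m = right y) /\
  (forall x p, maximal le p -> le x p ->
     (exists m, is_inf2 le (left x) p m /\ left m = left x /\ right m = p) /\
     (exists m, is_inf2 le p (right x) m /\ left m = p /\ right m = right x)).

Definition interval_domain {D : Type} (le : D -> D -> Prop) (left right : D -> D) : Prop :=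
  interval_poset le left right /\
  continuous_dcpo le /\
  (forall x p, maximal le p -> way_below le x p ->
     (forall m, is_inf2 le (left x) p m -> exists z, way_below le m z) /\
     (forall m, is_inf2 le p (right x) m -> exists z, way_below le m z)) /\
  (forall x,
     ((exists a, way_below le x a) <->
      (forall y, left y = left x -> le y x ->
         way_below_in le (fun z => right z = right y) y (right y))) /\
     ((exists a, way_below le x a) <->
      (forall y, right y = right x -> le y x ->
         way_below_in le (fun z => left z = left y) y (left y)))) /\
  (forall p S s, (forall z, S z -> left z = p) -> directed le S -> is_sup le S s ->
     left s = p /\
     (forall q Tt t, (forall z, Tt z -> left z = q) -> directed le Tt -> is_sup le Tt t ->
        (forall w, (exists z, S z /\ right z = w) <-> (exists z, Tt z /\ right z = w)) ->
        right t = right s)) /\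
  (forall q S s, (forall z, S z -> right z = q) -> directed le S -> is_sup le S s ->
     right s = q /\
     (forall p Tt t, (forall z, Tt z -> right z = p) -> directed le Tt -> is_sup le Tt t ->
        (forall w, (exists z, S z /\ left z = w) <-> (exists z, Tt z /\ left z = w)) ->
        left t = left s)) /\
  (forall x, scott_compact le (fun y => maximal le y /\ le x y)).

Definition IN_morphism {D E : Type} (leD : D -> D -> Prop) (leE : E -> E -> Prop)
  (leftD rightD : D -> D) (leftE rightE : E -> E) (f : D -> E) : Prop :=
  scott_continuous leD leE f /\
  (forall x, f (leftD x) = leftE (f x)) /\
  (forall x, f (rightD x) = rightE (f x)).

(* an element of IX is a closed interval [a,b] with a <= b, represented by (a,b) *)
Definition IX {X : Type} (le : X -> X -> Prop) : Type :=
  { p : X * X | le (fst p) (snd p) }.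

Definition IX_set {X : Type} {le : X -> X -> Prop} (x : IX le) : X -> Prop :=
  closed_interval le (fst (proj1_sig x)) (snd (proj1_sig x)).

(* reverse inclusion *)
Definition IX_le {X : Type} (le : X -> X -> Prop) (x y : IX le) : Prop :=
  forall z, IX_set y z -> IX_set x z.

Definition IX_left {X : Type} (le : X -> X -> Prop) (hr : forall a, le a a)
  (x : IX le) : IX le :=
  exist _ (fst (proj1_sig x), fst (proj1_sig x)) (hr (fst (proj1_sig x))).
Definition IX_right {X : Type} (le : X -> X -> Prop) (hr : forall a, le a a)
  (x : IX le) : IX le :=
  exist _ (snd (proj1_sig x), snd (proj1_sig x)) (hr (snd (proj1_sig x))).

Definition fbar {X Y : Type} (leX : X -> X -> Prop) (leY : Y -> Y -> Prop)
  (f : X -> Y) (hf : monotone leX leY f) (x : IX leX) : IX leY :=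
  exist _ (f (fst (proj1_sig x)), f (snd (proj1_sig x)))
        (hf _ _ (proj2_sig x)).

(* Main.v *)
Require Import Defs.
From Stdlib Require Import List Classical ProofIrrelevance FunctionalExtensionality PropExtensionality.

Lemma gh_po {X} {le : X -> X -> Prop} (H : globally_hyperbolic le) : is_partial_order le.
Proof. exact (proj1 (proj1 (proj1 H))). Qed.

Lemma gh_refl {X} {le : X -> X -> Prop} (H : globally_hyperbolic le) x : le x x.
Proof. exact (proj1 (gh_po H) x). Qed.
Lemma gh_anti {X} {le : X -> X -> Prop} (H : globally_hyperbolic le) x y : le x y -> le y x -> x = y.
Proof. exact (proj1 (proj2 (gh_po H)) x y). Qed.
Lemma gh_trans {X} {le : X -> X -> Prop} (H : globally_hyperbolic le) x y z : le x y -> le y z -> le x z.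
Proof. exact (proj2 (proj2 (gh_po H)) x y z). Qed.

Lemma gh_bic1 {X} {le : X -> X -> Prop} (H : globally_hyperbolic le) x y :
  way_below le x y <->
     (forall S, filtered le S -> forall i, is_inf le S i -> le i x ->
        exists s, S s /\ le s y).
Proof. exact (proj1 (proj2 (proj1 H)) x y). Qed.

Lemma up_fil {X} {le : X -> X -> Prop} (H : globally_hyperbolic le) x :
  filtered le (fun a => way_below le x a) /\ is_inf le (fun a => way_below le x a) x.
Proof. exact (proj2 (proj2 (proj1 H)) x). Qed.

Lemma wb_le {X} {le : X -> X -> Prop} (H : globally_hyperbolic le) x y :
  way_below le x y -> le x y.
Proof.
  intro W. destruct (W (fun z => z = y)) with (s := y) as [t [Ht Hxt]].
  - split. exists y; reflexivity. intros a b -> ->. exists y. split; [reflexivity|split; apply (gh_refl H)].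
  - split. intros s ->; apply (gh_refl H). intros u Hu; apply Hu; reflexivity.
  - apply (gh_refl H).
  - subst; exact Hxt.
Qed.

Lemma wb_trans_l {X} {le : X -> X -> Prop} (H : globally_hyperbolic le) x y z :
  le x y -> way_below le y z -> way_below le x z.
Proof.
  intros Hxy W S D s Hs Hzs. destruct (W S D s Hs Hzs) as [t [St Ht]].
  exists t; split; [exact St| exact (gh_trans H _ _ _ Hxy Ht)].
Qed.

Lemma wb_trans_r {X} {le : X -> X -> Prop} (H : globally_hyperbolic le) x y z :
  way_below le x y -> le y z -> way_below le x z.
Proof.
  intros W Hyz S D s Hs Hzs. exact (W S D s Hs (gh_trans H _ _ _ Hyz Hzs)).
Qed.

Lemma down_dir {X} {le : X -> X -> Prop} (H : globally_hyperbolic le) x :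
  directed le (fun a => way_below le a x) /\ is_sup le (fun a => way_below le a x) x.
Proof.
  destruct (proj2 (proj1 (proj1 H))) as [B HB].
  destruct (HB x) as [S [HS [[[s0 Hs0] Dir] [ub lub]]]].
  split; [split|split].
  - exists s0. exact (proj2 (HS s0 Hs0)).
  - intros y1 y2 W1 W2.
    destruct (W1 S (conj (ex_intro _ s0 Hs0) Dir) x (conj ub lub) (gh_refl H x)) as [t1 [St1 H1]].
    destruct (W2 S (conj (ex_intro _ s0 Hs0) Dir) x (conj ub lub) (gh_refl H x)) as [t2 [St2 H2]].
    destruct (Dir t1 t2 St1 St2) as [t3 [St3 [H13 H23]]].
    exists t3. split. exact (proj2 (HS t3 St3)).
    split; eapply (gh_trans H); eauto.
  - intros s Hs. exact (wb_le H _ _ Hs).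
  - intros u Hu. apply lub. intros s Hs. apply Hu. exact (proj2 (HS s Hs)).
Qed.

Lemma interp {X} {le : X -> X -> Prop} (H : globally_hyperbolic le) a c :
  way_below le a c -> exists z, way_below le a z /\ way_below le z c.
Proof.
  intro W.
  set (D := fun y => exists z, way_below le y z /\ way_below le z c).
  assert (DD : directed le D).
  { split.
    - destruct (proj1 (proj1 (down_dir H c))) as [z0 Hz0].
      destruct (proj1 (proj1 (down_dir H z0))) as [y0 Hy0].
      exists y0, z0; split; assumption.
    - intros y1 y2 [z1 [Y1 Z1]] [z2 [Y2 Z2]].
      destruct (proj2 (proj1 (down_dir H c)) z1 z2 Z1 Z2) as [z3 [Z3 [H13 H23]]].
      destruct (proj2 (proj1 (down_dir H z3)) y1 y2 (wb_trans_r H _ _ _ Y1 H13) (wb_trans_r H _ _ _ Y2 H23))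
        as [y3 [Y3 [K1 K2]]].
      exists y3. split; [exists z3; split; assumption| split; assumption]. }
  assert (DS : is_sup le D c).
  { split.
    - intros y [z [Y Z]]. eapply (gh_trans H); apply (wb_le H); eassumption.
    - intros u Hu. apply (proj2 (proj2 (down_dir H c))). intros z Z.
      apply (proj2 (proj2 (down_dir H z))). intros y Y. apply Hu. exists z; split; assumption. }
  destruct (W D DD c DS (gh_refl H c)) as [y [[z [Y Z]] Hay]].
  exists z. split; [exact (wb_trans_l H _ _ _ Hay Y)| exact Z].
Qed.

Lemma sup_unique {X} {le : X -> X -> Prop} (P : is_partial_order le) S a b :
  is_sup le S a -> is_sup le S b -> a = b.
Proof.
  intros [ua la] [ub lb]. apply (proj1 (proj2 P)); [apply la; exact ub| apply lb; exact ua].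
Qed.
Lemma inf_unique {X} {le : X -> X -> Prop} (P : is_partial_order le) S a b :
  is_inf le S a -> is_inf le S b -> a = b.
Proof.
  intros [ua la] [ub lb]. apply (proj1 (proj2 P)); [apply lb; exact ua| apply la; exact ub].
Qed.

Lemma closed_up {X} {le : X -> X -> Prop} (H : globally_hyperbolic le) a :
  interval_open le (fun x => ~ le a x).
Proof.
  intros x Hx.
  destruct (classic (exists b', way_below le x b' /\ ~ le a b')) as [[b' [Hb1 Hb2]]|Hn].
  - destruct (proj1 (proj1 (down_dir H x))) as [a' Ha'].
    exists a', b'. split. split; assumption.
    intros z [_ Z] Haz. apply Hb2. exact (gh_trans H _ _ _ Haz (wb_le H _ _ Z)).
  - exfalso. apply Hx. apply (proj2 (proj2 (up_fil H x))). intros s Hs.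
    destruct (classic (le a s)) as [h|h]; [exact h| exfalso; apply Hn; exists s; split; assumption].
Qed.

Lemma wb_flip {X} {le : X -> X -> Prop} (H : globally_hyperbolic le) x y :
  way_below (fun a b => le b a) x y <-> way_below le y x.
Proof.
  destruct (gh_bic1 H y x) as [H1 H2]. split.
  - intro W. apply H2. intros S FS i Hi Hiy. exact (W S FS i Hi Hiy).
  - intro W. intros S D s Hs Hys. exact (H1 W S D s Hs Hys).
Qed.

Lemma ib_flip {X} {le : X -> X -> Prop} (H : globally_hyperbolic le) a b z :
  interval_basic (fun a b => le b a) a b z <-> interval_basic le b a z.
Proof.
  unfold interval_basic. rewrite !(wb_flip H). tauto.
Qed.

Lemma io_flip {X} {le : X -> X -> Prop} (H : globally_hyperbolic le) U :
  interval_open (fun a b => le b a) U <-> interval_open le U.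
Proof.
  split; intros HU x Hx; destruct (HU x Hx) as [a [b [Hb Hs]]]; exists b, a.
  - split. apply (ib_flip H); exact Hb. intros z Hz; apply Hs; apply (ib_flip H); exact Hz.
  - split. apply (ib_flip H); exact Hb. intros z Hz; apply Hs; apply (ib_flip H); exact Hz.
Qed.

Lemma compact_ext {X} (P : (X -> Prop) -> Prop) (K K' : X -> Prop) :
  compact_in P K' -> (forall x, K x <-> K' x) -> compact_in P K.
Proof.
  intros C Hs I U HU Hc.
  destruct (C I U HU) as [l Hl].
  - intros x Hx. apply Hc. apply Hs. exact Hx.
  - exists l. intros x Hx. apply Hl. apply Hs. exact Hx.
Qed.

Lemma GH_flip {X} {le : X -> X -> Prop} (H : globally_hyperbolic le) :
  globally_hyperbolic (fun a b => le b a).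
Proof.
  assert (EqW : forall x, (fun a => way_below (fun a b => le b a) x a) = (fun a => way_below le a x)).
  { intro x. apply functional_extensionality. intro a. apply propositional_extensionality. apply (wb_flip H). }
  assert (EqO : interval_open (fun a b => le b a) = interval_open le).
  { apply functional_extensionality. intro U. apply propositional_extensionality. apply (io_flip H). }
  split; [split; [|split]|].
  - split.
    + split; [|split].
      * intro x; apply (gh_refl H).
      * intros x y h1 h2; apply (gh_anti H); assumption.
      * intros x y z h1 h2; exact (gh_trans H _ _ _ h2 h1).
    + exists (fun _ => True). intro x. exists (fun a => way_below le x a).
      split; [|exact (up_fil H x)].
      intros s Hs. split; [exact I| apply (wb_flip H); exact Hs].
  - intros x y. rewrite (wb_flip H). split; intro W; exact W.
  - intro x. rewrite EqW. exact (down_dir H x).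
  - intros a b. rewrite EqO. eapply compact_ext. exact (proj2 H b a).
    intro z. unfold closed_interval. tauto.
Qed.

Lemma io_and_const {X} (le : X -> X -> Prop) (P : Prop) U :
  interval_open le U -> interval_open le (fun x => P /\ U x).
Proof.
  intros HO x [HP HU]. destruct (HO x HU) as [a [b [Hb Hs]]].
  exists a, b. split. exact Hb. intros z Hz; split; [exact HP| exact (Hs z Hz)].
Qed.

Lemma closed_down {X} {le : X -> X -> Prop} (H : globally_hyperbolic le) b :
  interval_open le (fun x => ~ le x b).
Proof.
  apply (io_flip H). exact (closed_up (GH_flip H) b).
Qed.

Lemma list_ub {X} {le : X -> X -> Prop} (H : globally_hyperbolic le) (A : X -> Prop) a0 :
  directed le A -> A a0 -> forall l : list (X + X),
  exists k, A k /\ le a0 k /\ forall a, In (inl a) l -> A a -> le a k.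
Proof.
  intros [_ D] A0 l. induction l as [|i l IH].
  - exists a0. split; [exact A0| split; [apply (gh_refl H)| intros a []]].
  - destruct IH as [k [Ak [Hk Hl]]]. destruct i as [a|u].
    + destruct (classic (A a)) as [Aa|nAa].
      * destruct (D k a Ak Aa) as [k' [Ak' [H1 H2]]].
        exists k'. split; [exact Ak'| split; [exact (gh_trans H _ _ _ Hk H1)|]].
        intros a' [E|E] Aa'.
        -- injection E; intros ->; exact H2.
        -- exact (gh_trans H _ _ _ (Hl a' E Aa') H1).
      * exists k. split; [exact Ak| split; [exact Hk|]].
        intros a' [E|E] Aa'.
        -- injection E; intros ->; contradiction.
        -- exact (Hl a' E Aa').
    + exists k. split; [exact Ak| split; [exact Hk|]].
      intros a' [E|E] Aa'. discriminate. exact (Hl a' E Aa').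
Qed.

Lemma L_sup {X} {le : X -> X -> Prop} (H : globally_hyperbolic le) (A : X -> Prop) a0 b :
  directed le A -> A a0 -> (forall a, A a -> le a b) -> exists e, is_sup le A e.
Proof.
  intros DA A0 Hb. apply NNPP. intro Hno.
  set (U := fun i : X + X => match i with
      | inl a => fun x => A a /\ ~ le a x
      | inr u => fun x => upper_bound le A u /\ ~ le x u end).
  destruct (proj2 H a0 b (X + X)%type U) as [l Hl].
  - intros [a|u]; simpl; apply io_and_const; [apply (closed_up H)| apply (closed_down H)].
  - intros x _. destruct (classic (upper_bound le A x)) as [Hub|Hnub].
    + destruct (not_all_ex_not _ _ (fun h => Hno (ex_intro _ x (conj Hub h)))) as [u Hu].
      apply imply_to_and in Hu. exists (inr u). exact Hu.
    + destruct (not_all_ex_not _ _ Hnub) as [s Hs].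
      apply imply_to_and in Hs. exists (inl s). exact Hs.
  - destruct (list_ub H A a0 DA A0 l) as [k [Ak [Hk Hkl]]].
    destruct (Hl k (conj Hk (Hb k Ak))) as [[a|u] [Hin HU]]; simpl in HU.
    + destruct HU as [Aa Hn]. exact (Hn (Hkl a Hin Aa)).
    + destruct HU as [Hu Hn]. exact (Hn (Hu k Ak)).
Qed.

Lemma L_inf {X} {le : X -> X -> Prop} (H : globally_hyperbolic le) (B : X -> Prop) b0 a :
  filtered le B -> B b0 -> (forall b, B b -> le a b) -> exists f, is_inf le B f.
Proof.
  intros FB B0 Ha. exact (@L_sup X (fun x y => le y x) (GH_flip H) B b0 a FB B0 Ha).
Qed.

Lemma f_sup {X Y} {leX : X -> X -> Prop} {leY : Y -> Y -> Prop}
  (HX : globally_hyperbolic leX) (HY : globally_hyperbolic leY) (f : X -> Y)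
  (hf : monotone leX leY f) (hc : interval_continuous leX leY f) A e :
  directed leX A -> is_sup leX A e -> is_sup leY (fun y => exists a, A a /\ f a = y) (f e).
Proof.
  intros DA SA. destruct DA as [[a0 A0] DA'].
  assert (DI : directed leY (fun y => exists a, A a /\ f a = y)).
  { split. exists (f a0), a0; split; [exact A0|reflexivity].
    intros y1 y2 [a1 [A1 <-]] [a2 [A2 <-]].
    destruct (DA' a1 a2 A1 A2) as [a3 [A3 [H1 H2]]].
    exists (f a3). split; [exists a3; split; [exact A3|reflexivity]| split; apply hf; assumption]. }
  destruct (L_sup HY _ (f a0) (f e) DI (ex_intro _ a0 (conj A0 eq_refl))) as [E' [ubE lubE]].
  { intros y [a [Aa <-]]. apply hf. exact (proj1 SA a Aa). }
  assert (Hle : leY (f e) E').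
  { apply NNPP. intro Hn.
    destruct (hc _ (closed_down HY E') e Hn) as [a' [b' [[Ha' Hb'] Hsub]]].
    destruct (interp HX _ _ Ha') as [a'' [W1 W2]].
    destruct (W2 A (conj (ex_intro _ a0 A0) DA') e SA (gh_refl HX e)) as [a [Aa Ha]].
    apply (Hsub a). split.
    - exact (wb_trans_r HX _ _ _ W1 Ha).
    - exact (wb_trans_l HX _ _ _ (proj1 SA a Aa) Hb').
    - apply ubE. exists a; split; [exact Aa|reflexivity]. }
  split.
  - intros y [a [Aa <-]]. apply hf. exact (proj1 SA a Aa).
  - intros u Hu. exact (gh_trans HY _ _ _ Hle (lubE u Hu)).
Qed.

Lemma f_inf {X Y} {leX : X -> X -> Prop} {leY : Y -> Y -> Prop}
  (HX : globally_hyperbolic leX) (HY : globally_hyperbolic leY) (f : X -> Y)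
  (hf : monotone leX leY f) (hc : interval_continuous leX leY f) A e :
  filtered leX A -> is_inf leX A e -> is_inf leY (fun y => exists a, A a /\ f a = y) (f e).
Proof.
  intros FA IA.
  refine (@f_sup X Y (fun a b => leX b a) (fun a b => leY b a) (GH_flip HX) (GH_flip HY) f _ _ A e FA IA).
  - intros a b h. exact (hf b a h).
  - intros U HU. apply (io_flip HX). apply hc. apply (io_flip HY). exact HU.
Qed.

Definition lo {X} {le : X -> X -> Prop} (x : IX le) : X := fst (proj1_sig x).
Definition hi {X} {le : X -> X -> Prop} (x : IX le) : X := snd (proj1_sig x).
Definition mk {X} (le : X -> X -> Prop) a b (h : le a b) : IX le := exist _ (a, b) h.

Lemma lohi {X} {le : X -> X -> Prop} (x : IX le) : le (lo x) (hi x).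
Proof. exact (proj2_sig x). Qed.

Lemma IX_eq {X} {le : X -> X -> Prop} (x y : IX le) : lo x = lo y -> hi x = hi y -> x = y.
Proof.
  destruct x as [[a b] h], y as [[c d] h']; unfold lo, hi; simpl; intros -> ->.
  f_equal. apply proof_irrelevance.
Qed.

Lemma IX_le_iff {X} {le : X -> X -> Prop} (H : globally_hyperbolic le) (x y : IX le) :
  IX_le le x y <-> le (lo x) (lo y) /\ le (hi y) (hi x).
Proof.
  unfold IX_le, IX_set, closed_interval. fold (lo x) (hi x) (lo y) (hi y). split.
  - intro Hs. split.
    + apply (Hs (lo y)). split; [apply (gh_refl H)| apply lohi].
    + apply (Hs (hi y)). split; [apply lohi| apply (gh_refl H)].
  - intros [h1 h2] z [z1 z2]. split; eapply (gh_trans H); eassumption.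
Qed.

Lemma po_IX {X} {le : X -> X -> Prop} (H : globally_hyperbolic le) : is_partial_order (IX_le le).
Proof.
  split; [|split].
  - intros x z h; exact h.
  - intros x y h1 h2. apply (IX_le_iff H) in h1, h2. destruct h1, h2.
    apply IX_eq; apply (gh_anti H); assumption.
  - intros x y z h1 h2 w hw. exact (h1 w (h2 w hw)).
Qed.

Definition loimg {X} {le : X -> X -> Prop} (S : IX le -> Prop) : X -> Prop :=
  fun a => exists z, S z /\ lo z = a.
Definition hiimg {X} {le : X -> X -> Prop} (S : IX le -> Prop) : X -> Prop :=
  fun a => exists z, S z /\ hi z = a.

Lemma sup_IX_of {X} {le : X -> X -> Prop} (H : globally_hyperbolic le) (S : IX le -> Prop) e f
  (h : le e f) : is_sup le (loimg S) e -> is_inf le (hiimg S) f -> is_sup (IX_le le) S (mk le e f h).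
Proof.
  intros [ue le'] [uf lf]. split.
  - intros z Sz. apply (IX_le_iff H). split.
    + apply ue. exists z; split; [exact Sz|reflexivity].
    + apply uf. exists z; split; [exact Sz|reflexivity].
  - intros u Hu. apply (IX_le_iff H). split.
    + apply le'. intros a [z [Sz <-]]. exact (proj1 (proj1 (IX_le_iff H _ _) (Hu z Sz))).
    + apply lf. intros a [z [Sz <-]]. exact (proj2 (proj1 (IX_le_iff H _ _) (Hu z Sz))).
Qed.

Lemma dcpo_spec {X} {le : X -> X -> Prop} (H : globally_hyperbolic le) (S : IX le -> Prop) :
  directed (IX_le le) S -> exists e f (h : le e f),
    is_sup le (loimg S) e /\ is_inf le (hiimg S) f /\ is_sup (IX_le le) S (mk le e f h).
Proof.
  intros [[z0 S0] D].
  assert (DA : directed le (loimg S)).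
  { split. exists (lo z0), z0; split; [exact S0|reflexivity].
    intros a1 a2 [w1 [T1 <-]] [w2 [T2 <-]]. destruct (D w1 w2 T1 T2) as [z3 [S3 [H1 H2]]].
    apply (IX_le_iff H) in H1, H2.
    exists (lo z3). split; [exists z3; split; [exact S3|reflexivity]| split; [exact (proj1 H1)|exact (proj1 H2)]]. }
  assert (FB : filtered le (hiimg S)).
  { split. exists (hi z0), z0; split; [exact S0|reflexivity].
    intros a1 a2 [w1 [T1 <-]] [w2 [T2 <-]]. destruct (D w1 w2 T1 T2) as [z3 [S3 [H1 H2]]].
    apply (IX_le_iff H) in H1, H2.
    exists (hi z3). split; [exists z3; split; [exact S3|reflexivity]| split; [exact (proj2 H1)|exact (proj2 H2)]]. }
  assert (AB : forall a b, loimg S a -> hiimg S b -> le a b).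
  { intros a b [z1 [S1 <-]] [z2 [S2 <-]]. destruct (D z1 z2 S1 S2) as [z3 [S3 [H1 H2]]].
    apply (IX_le_iff H) in H1, H2.
    eapply (gh_trans H). exact (proj1 H1). eapply (gh_trans H). apply lohi. exact (proj2 H2). }
  destruct (L_sup H (loimg S) (lo z0) (hi z0) DA (ex_intro _ z0 (conj S0 eq_refl))) as [e He].
  { intros a Ha. apply AB; [exact Ha| exists z0; split; [exact S0|reflexivity]]. }
  destruct (L_inf H (hiimg S) (hi z0) (lo z0) FB (ex_intro _ z0 (conj S0 eq_refl))) as [f Hf].
  { intros b Hb. apply AB; [exists z0; split; [exact S0|reflexivity]| exact Hb]. }
  assert (h : le e f).
  { apply (proj2 Hf). intros b Hb. apply (proj2 He). intros a Ha. apply AB; assumption. }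
  exists e, f, h. split; [exact He| split; [exact Hf| apply sup_IX_of; assumption]].
Qed.

Lemma sup_spec {X} {le : X -> X -> Prop} (H : globally_hyperbolic le) (S : IX le -> Prop) s :
  directed (IX_le le) S -> is_sup (IX_le le) S s ->
  is_sup le (loimg S) (lo s) /\ is_inf le (hiimg S) (hi s).
Proof.
  intros D Hs. destruct (dcpo_spec H S D) as [e [f [h [He [Hf Hm]]]]].
  rewrite (sup_unique (po_IX H) S s (mk le e f h) Hs Hm). split; assumption.
Qed.

Definition Ap {X} {le : X -> X -> Prop} (y : IX le) : IX le -> Prop :=
  fun z => way_below le (lo z) (lo y) /\ way_below le (hi y) (hi z).

Lemma Ap_dir {X} {le : X -> X -> Prop} (H : globally_hyperbolic le) (y : IX le) :
  directed (IX_le le) (Ap y) /\ is_sup (IX_le le) (Ap y) y.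
Proof.
  destruct (down_dir H (lo y)) as [[[a0 A0] DA] [_ SA]].
  destruct (up_fil H (hi y)) as [[[b0 B0] FB] [_ IB]].
  assert (mkok : forall a b, way_below le a (lo y) -> way_below le (hi y) b -> le a b).
  { intros a b Ha Hb. eapply (gh_trans H). apply (wb_le H _ _ Ha).
    eapply (gh_trans H). apply lohi. apply (wb_le H _ _ Hb). }
  split; [split|split].
  - exists (mk le a0 b0 (mkok _ _ A0 B0)). split; assumption.
  - intros z1 z2 [A1 B1] [A2 B2].
    destruct (DA _ _ A1 A2) as [a3 [A3 [H1 H2]]].
    destruct (FB _ _ B1 B2) as [b3 [B3 [K1 K2]]].
    exists (mk le a3 b3 (mkok _ _ A3 B3)). split; [split; assumption|].
    split; apply (IX_le_iff H); split; assumption.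
  - intros z [Az Bz]. apply (IX_le_iff H). split; apply (wb_le H); assumption.
  - intros u Hu. apply (IX_le_iff H). split.
    + apply SA. intros a Ha. 
      exact (proj1 (proj1 (IX_le_iff H _ _) (Hu (mk le a b0 (mkok _ _ Ha B0)) (conj Ha B0)))).
    + apply IB. intros b Hb.
      exact (proj2 (proj1 (IX_le_iff H _ _) (Hu (mk le a0 b (mkok _ _ A0 Hb)) (conj A0 Hb)))).
Qed.

Lemma wbIX_nec {X} {le : X -> X -> Prop} (H : globally_hyperbolic le) (x y : IX le) :
  way_below (IX_le le) x y -> way_below le (lo x) (lo y) /\ way_below le (hi y) (hi x).
Proof.
  intro W. destruct (Ap_dir H y) as [D S].
  destruct (W (Ap y) D y S (fun z h => h)) as [z [[Az Bz] Hxz]].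
  apply (IX_le_iff H) in Hxz. destruct Hxz as [h1 h2].
  split; [exact (wb_trans_l H _ _ _ h1 Az) | exact (wb_trans_r H _ _ _ Bz h2)].
Qed.

Lemma wbIX_suff {X} {le : X -> X -> Prop} (H : globally_hyperbolic le) (x y : IX le) :
  way_below le (lo x) (lo y) -> way_below le (hi y) (hi x) -> way_below (IX_le le) x y.
Proof.
  intros Wl Wh S D s Hs Hys.
  destruct (sup_spec H S s D Hs) as [SA IB].
  apply (IX_le_iff H) in Hys. destruct Hys as [h1 h2].
  destruct (Wl (loimg S)) with (s := lo s) as [a [[z1 [S1 <-]] K1]].
  { destruct D as [[z0 S0] D]. split. exists (lo z0), z0; split; [exact S0|reflexivity].
    intros a1 a2 [w1 [T1 <-]] [w2 [T2 <-]]. destruct (D w1 w2 T1 T2) as [z3 [S3 [H1 H2]]].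
    apply (IX_le_iff H) in H1, H2.
    exists (lo z3). split; [exists z3; split; [exact S3|reflexivity]| split; [exact (proj1 H1)|exact (proj1 H2)]]. }
  { exact SA. } { exact h1. }
  destruct (proj1 (gh_bic1 H (hi y) (hi x)) Wh (hiimg S)) with (i := hi s) as [b [[z2 [S2 <-]] K2]].
  { destruct D as [[z0 S0] D]. split. exists (hi z0), z0; split; [exact S0|reflexivity].
    intros a1 a2 [w1 [T1 <-]] [w2 [T2 <-]]. destruct (D w1 w2 T1 T2) as [z3 [S3 [H1 H2]]].
    apply (IX_le_iff H) in H1, H2.
    exists (hi z3). split; [exists z3; split; [exact S3|reflexivity]| split; [exact (proj2 H1)|exact (proj2 H2)]]. }
  { exact IB. } { exact h2. }
  destruct (proj2 D z1 z2 S1 S2) as [z3 [S3 [H1 H2]]].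
  apply (IX_le_iff H) in H1, H2.
  exists z3. split; [exact S3|]. apply (IX_le_iff H). split.
  - exact (gh_trans H _ _ _ K1 (proj1 H1)).
  - exact (gh_trans H _ _ _ (proj2 H2) K2).
Qed.

Lemma loimg_dir {X} {le : X -> X -> Prop} (H : globally_hyperbolic le) (S : IX le -> Prop) :
  directed (IX_le le) S -> directed le (loimg S).
Proof.
  intros [[z0 S0] D]. split. exists (lo z0), z0; split; [exact S0|reflexivity].
  intros a1 a2 [w1 [T1 <-]] [w2 [T2 <-]]. destruct (D w1 w2 T1 T2) as [z3 [S3 [H1 H2]]].
  apply (IX_le_iff H) in H1, H2.
  exists (lo z3). split; [exists z3; split; [exact S3|reflexivity]| split; [exact (proj1 H1)|exact (proj1 H2)]].
Qed.

Lemma hiimg_fil {X} {le : X -> X -> Prop} (H : globally_hyperbolic le) (S : IX le -> Prop) :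
  directed (IX_le le) S -> filtered le (hiimg S).
Proof.
  intros [[z0 S0] D]. split. exists (hi z0), z0; split; [exact S0|reflexivity].
  intros a1 a2 [w1 [T1 <-]] [w2 [T2 <-]]. destruct (D w1 w2 T1 T2) as [z3 [S3 [H1 H2]]].
  apply (IX_le_iff H) in H1, H2.
  exists (hi z3). split; [exists z3; split; [exact S3|reflexivity]| split; [exact (proj2 H1)|exact (proj2 H2)]].
Qed.

Lemma is_sup_ext {T} (le : T -> T -> Prop) (A B : T -> Prop) s :
  (forall x, A x <-> B x) -> is_sup le A s -> is_sup le B s.
Proof.
  intros E [u l]. split. intros x Bx; apply u, E, Bx.
  intros v Hv; apply l; intros x Ax; apply Hv, E, Ax.
Qed.
Lemma is_inf_ext {T} (le : T -> T -> Prop) (A B : T -> Prop) s :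
  (forall x, A x <-> B x) -> is_inf le A s -> is_inf le B s.
Proof.
  intros E [u l]. split. intros x Bx; apply u, E, Bx.
  intros v Hv; apply l; intros x Ax; apply Hv, E, Ax.
Qed.

Lemma left_eq {X} {le : X -> X -> Prop} (hr : forall a, le a a) (y z : IX le) :
  IX_left le hr z = IX_left le hr y <-> lo z = lo y.
Proof.
  split. intro E. exact (f_equal lo E).
  intro E. apply IX_eq; exact E.
Qed.
Lemma right_eq {X} {le : X -> X -> Prop} (hr : forall a, le a a) (y z : IX le) :
  IX_right le hr z = IX_right le hr y <-> hi z = hi y.
Proof.
  split. intro E. exact (f_equal lo E).
  intro E. apply IX_eq; exact E.
Qed.

Lemma max_IX {X} {le : X -> X -> Prop} (H : globally_hyperbolic le) (y : IX le) :
  maximal (IX_le le) y <-> lo y = hi y.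
Proof.
  split.
  - intro M. assert (E := M (mk le (lo y) (lo y) (gh_refl H _))).
    rewrite <- E. reflexivity. apply (IX_le_iff H). split; [apply (gh_refl H)| apply lohi].
  - intros E w Hw. apply (IX_le_iff H) in Hw. destruct Hw as [h1 h2].
    assert (h3 := lohi w).
    assert (lo w = lo y). { apply (gh_anti H). rewrite E. eapply (gh_trans H); eassumption. exact h1. }
    assert (hi w = hi y). { apply (gh_anti H). exact h2. rewrite <- E. eapply (gh_trans H); eassumption. }
    apply IX_eq; assumption.
Qed.

Lemma mk_inf2 {T} (R : T -> T -> Prop) a b m :
  R m a -> R m b -> (forall u, R u a -> R u b -> R u m) -> is_inf2 R a b m.
Proof.
  intros h1 h2 h3. split.
  - intros s [->| ->]; assumption.
  - intros u Hu. apply h3; apply Hu; [left|right]; reflexivity.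
Qed.
Lemma inf2_lb {T} (R : T -> T -> Prop) a b m : is_inf2 R a b m -> R m a /\ R m b.
Proof. intros [u _]. split; apply u; [left|right]; reflexivity. Qed.

Lemma ex_wb {X} {le : X -> X -> Prop} (H : globally_hyperbolic le) (x : IX le) :
  (exists a, way_below (IX_le le) x a) <-> way_below le (lo x) (hi x).
Proof.
  split.
  - intros [z W]. apply (wbIX_nec H) in W. destruct W as [W1 W2].
    apply (wb_trans_r H _ _ _ W1). eapply (gh_trans H). apply lohi. apply (wb_le H _ _ W2).
  - intro W. destruct (interp H _ _ W) as [c [W1 W2]].
    exists (mk le c c (gh_refl H c)). apply (wbIX_suff H); assumption.
Qed.

Lemma WBin_R {X} {le : X -> X -> Prop} (H : globally_hyperbolic le) (hr : forall a, le a a) (y : IX le) :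
  way_below_in (IX_le le) (fun z => IX_right le hr z = IX_right le hr y) y (IX_right le hr y)
  <-> way_below le (lo y) (hi y).
Proof.
  split.
  - intro W.
    destruct (down_dir H (hi y)) as [[[a0 A0] DA] [_ SA]].
    set (S := fun z : IX le => hi z = hi y /\ way_below le (lo z) (hi y)).
    destruct (W S) with (s := IX_right le hr y) as [t [[Ht1 Ht2] Hyt]].
    + intros z [Hz _]. apply (right_eq hr). exact Hz.
    + split.
      * exists (mk le a0 (hi y) (wb_le H _ _ A0)). split; [reflexivity| exact A0].
      * intros z1 z2 [E1 W1] [E2 W2]. destruct (DA _ _ W1 W2) as [a3 [A3 [H1 H2]]].
        exists (mk le a3 (hi y) (wb_le H _ _ A3)). split; [split; [reflexivity|exact A3]|].
        split; apply (IX_le_iff H); split; try assumption; simpl; rewrite ?E1, ?E2; apply (gh_refl H).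
    + reflexivity.
    + split.
      * intros z [E Wz]. apply (IX_le_iff H). split. apply (wb_le H _ _ Wz). simpl. rewrite E. apply (gh_refl H).
      * intros u Pu Hu. apply (right_eq hr) in Pu. apply (IX_le_iff H). split.
        -- apply SA. intros a Ha.
           exact (proj1 (proj1 (IX_le_iff H _ _) (Hu (mk le a (hi y) (wb_le H _ _ Ha)) (conj eq_refl Ha)))).
        -- rewrite Pu. apply (gh_refl H).
    + apply (IX_le_iff H). split; [apply lohi| apply (gh_refl H)].
    + apply (IX_le_iff H) in Hyt. exact (wb_trans_l H _ _ _ (proj1 Hyt) Ht2).
  - intros W S HSP D s Ps [ubs lubs] Hys.
    apply (right_eq hr) in Ps. apply (IX_le_iff H) in Hys. destruct Hys as [Hd _].
    change (lo (IX_right le hr y)) with (hi y) in Hd.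
    assert (HS : forall z, S z -> hi z = hi y). { intros z Sz. apply (right_eq hr). apply HSP; exact Sz. }
    destruct D as [[z0 S0] D'].
    destruct (L_sup H (loimg S) (lo z0) (hi y) (loimg_dir H S (conj (ex_intro _ z0 S0) D'))
               (ex_intro _ z0 (conj S0 eq_refl))) as [e He].
    { intros a [z [Sz <-]]. rewrite <- (HS z Sz). apply lohi. }
    assert (hed : le e (hi y)).
    { apply (proj2 He). intros a [z [Sz <-]]. rewrite <- (HS z Sz). apply lohi. }
    set (u := mk le e (hi y) hed).
    assert (Hsu : IX_le le s u).
    { apply lubs. apply (right_eq hr). reflexivity.
      intros z Sz. apply (IX_le_iff H). split.
      - apply (proj1 He). exists z; split; [exact Sz|reflexivity].
      - simpl. rewrite (HS z Sz). apply (gh_refl H). }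
    apply (IX_le_iff H) in Hsu. destruct Hsu as [Hse _].
    assert (W' : way_below le (lo y) e).
    { apply (wb_trans_r H _ _ _ W). eapply (gh_trans H). exact Hd. exact Hse. }
    destruct (W' (loimg S) (loimg_dir H S (conj (ex_intro _ z0 S0) D')) e He (gh_refl H e))
      as [a [[z [Sz <-]] Ha]].
    exists z. split; [exact Sz|]. apply (IX_le_iff H). split; [exact Ha|].
    rewrite (HS z Sz). apply (gh_refl H).
Qed.

Lemma WBin_L {X} {le : X -> X -> Prop} (H : globally_hyperbolic le) (hr : forall a, le a a) (y : IX le) :
  way_below_in (IX_le le) (fun z => IX_left le hr z = IX_left le hr y) y (IX_left le hr y)
  <-> way_below le (lo y) (hi y).
Proof.
  split.
  - intro W.
    destruct (up_fil H (lo y)) as [[[b0 B0] FB] [_ IB]].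
    set (S := fun z : IX le => lo z = lo y /\ way_below le (lo y) (hi z)).
    destruct (W S) with (s := IX_left le hr y) as [t [[Ht1 Ht2] Hyt]].
    + intros z [Hz _]. apply (left_eq hr). exact Hz.
    + split.
      * exists (mk le (lo y) b0 (wb_le H _ _ B0)). split; [reflexivity| exact B0].
      * intros z1 z2 [E1 W1] [E2 W2]. destruct (FB _ _ W1 W2) as [b3 [B3 [H1 H2]]].
        exists (mk le (lo y) b3 (wb_le H _ _ B3)). split; [split; [reflexivity|exact B3]|].
        split; apply (IX_le_iff H); split; try assumption; simpl; rewrite ?E1, ?E2; apply (gh_refl H).
    + reflexivity.
    + split.
      * intros z [E Wz]. apply (IX_le_iff H). split. simpl. rewrite E. apply (gh_refl H). apply (wb_le H _ _ Wz).
      * intros u Pu Hu. apply (left_eq hr) in Pu. apply (IX_le_iff H). split.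
        -- rewrite Pu. apply (gh_refl H).
        -- apply IB. intros b Hb.
           exact (proj2 (proj1 (IX_le_iff H _ _) (Hu (mk le (lo y) b (wb_le H _ _ Hb)) (conj eq_refl Hb)))).
    + intros w hw; exact hw.
    + apply (IX_le_iff H) in Hyt. exact (wb_trans_r H _ _ _ Ht2 (proj2 Hyt)).
  - intros W S HSP D s Ps [ubs lubs] Hys.
    apply (left_eq hr) in Ps. apply (IX_le_iff H) in Hys. destruct Hys as [_ Hd].
    change (hi (IX_left le hr y)) with (lo y) in Hd.
    assert (HS : forall z, S z -> lo z = lo y). { intros z Sz. apply (left_eq hr). apply HSP; exact Sz. }
    destruct D as [[z0 S0] D'].
    destruct (L_inf H (hiimg S) (hi z0) (lo y) (hiimg_fil H S (conj (ex_intro _ z0 S0) D'))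
               (ex_intro _ z0 (conj S0 eq_refl))) as [f Hf].
    { intros b [z [Sz <-]]. rewrite <- (HS z Sz). apply lohi. }
    assert (hed : le (lo y) f).
    { apply (proj2 Hf). intros b [z [Sz <-]]. rewrite <- (HS z Sz). apply lohi. }
    set (u := mk le (lo y) f hed).
    assert (Hsu : IX_le le s u).
    { apply lubs. apply (left_eq hr). reflexivity.
      intros z Sz. apply (IX_le_iff H). split.
      - simpl. rewrite (HS z Sz). apply (gh_refl H).
      - apply (proj1 Hf). exists z; split; [exact Sz|reflexivity]. }
    apply (IX_le_iff H) in Hsu. destruct Hsu as [_ Hse].
    destruct (proj1 (gh_bic1 H (lo y) (hi y)) W (hiimg S) (hiimg_fil H S (conj (ex_intro _ z0 S0) D')) f Hf)
      as [b [[z [Sz <-]] Hb]].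
    { eapply (gh_trans H). exact Hse. exact Hd. }
    exists z. split; [exact Sz|]. apply (IX_le_iff H). split; [|exact Hb].
    rewrite (HS z Sz). apply (gh_refl H).
Qed.

Lemma obj_part {X} (le : X -> X -> Prop) (hr : forall a, le a a) (H : globally_hyperbolic le) :
  interval_domain (IX_le le) (IX_left le hr) (IX_right le hr).
Proof.
  assert (IFF := IX_le_iff H).
  split; [|split; [|split; [|split; [|split; [|split]]]]].
  -
    split; [exact (po_IX H)|split; [|split; [|split]]].
    + intro x. split; apply (max_IX H); reflexivity.
    + intro x. apply mk_inf2.
      * apply IFF. split; [apply (gh_refl H)| exact (lohi x)].
      * apply IFF. split; [exact (lohi x)| apply (gh_refl H)].
      * intros u h1 h2. apply IFF in h1, h2. apply IFF. split; [exact (proj1 h1)| exact (proj2 h2)].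
    + intros x y E. assert (E' : hi x = lo y) by exact (f_equal lo E).
      assert (h : le (lo x) (hi y)).
      { eapply (gh_trans H). exact (lohi x). rewrite E'. exact (lohi y). }
      exists (mk le (lo x) (hi y) h). split; [|split; apply IX_eq; reflexivity].
      apply mk_inf2.
      * apply IFF. split; [apply (gh_refl H)|]. simpl. rewrite E'. exact (lohi y).
      * apply IFF. split; [|apply (gh_refl H)]. simpl. rewrite <- E'. exact (lohi x).
      * intros u h1 h2. apply IFF in h1, h2. apply IFF. split; [exact (proj1 h1)| exact (proj2 h2)].
    + intros x p Mp Hxp. apply (max_IX H) in Mp. apply IFF in Hxp. destruct Hxp as [h1 h2].
      split.
      * exists (mk le (lo x) (lo p) h1). split; [|split; apply IX_eq; simpl; auto].
        apply mk_inf2.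
        -- apply IFF. split; [apply (gh_refl H)| exact h1].
        -- apply IFF. split; [exact h1| simpl; rewrite Mp; apply (gh_refl H)].
        -- intros u k1 k2. apply IFF in k1, k2. apply IFF. split; [exact (proj1 k1)|].
           change (le (lo p) (hi u)). rewrite Mp. exact (proj2 k2).
      * assert (h3 : le (lo p) (hi x)) by (rewrite Mp; exact h2).
        exists (mk le (lo p) (hi x) h3). split; [|split; apply IX_eq; simpl; auto].
        apply mk_inf2.
        -- apply IFF. split; [apply (gh_refl H)| change (le (hi p) (hi x)); rewrite <- Mp; exact h3].
        -- apply IFF. split; [exact h3| apply (gh_refl H)].
        -- intros u k1 k2. apply IFF in k1, k2. apply IFF. split; [exact (proj1 k1)| exact (proj2 k2)].
  -
    split.
    + split; [exact (po_IX H)|]. exists (fun _ => True). intro x. exists (Ap x).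
      split; [|exact (Ap_dir H x)].
      intros s [A B]. split; [exact I| apply (wbIX_suff H); assumption].
    + intros S D. destruct (dcpo_spec H S D) as [e [f [h [_ [_ Hs]]]]]. exists (mk le e f h); exact Hs.
  -
    intros x p Mp W. apply (max_IX H) in Mp. apply (wbIX_nec H) in W. destruct W as [W1 W2].
    split.
    + intros m Hm. apply inf2_lb in Hm. destruct Hm as [k1 k2]. apply IFF in k1, k2.
      destruct (interp H _ _ W1) as [w [V1 V2]].
      exists (mk le w w (gh_refl H w)). apply (wbIX_suff H).
      * exact (wb_trans_l H _ _ _ (proj1 k1) V1).
      * apply (wb_trans_r H _ _ _ V2). simpl. rewrite Mp. exact (proj2 k2).
    + intros m Hm. apply inf2_lb in Hm. destruct Hm as [k1 k2]. apply IFF in k1, k2.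
      destruct (interp H _ _ W2) as [w [V1 V2]].
      exists (mk le w w (gh_refl H w)). apply (wbIX_suff H).
      * apply (wb_trans_l H _ _ _ (proj1 k1)). rewrite Mp. exact V1.
      * exact (wb_trans_r H _ _ _ V2 (proj2 k2)).
  -
    intro x. rewrite (ex_wb H x). split; split.
    + intros W y Ey Hyx. apply (WBin_R H hr). apply (left_eq hr) in Ey. apply IFF in Hyx.
      rewrite Ey. exact (wb_trans_r H _ _ _ W (proj2 Hyx)).
    + intro Hall. apply (WBin_R H hr). apply Hall. reflexivity. intros w hw; exact hw.
    + intros W y Ey Hyx. apply (WBin_L H hr). apply (right_eq hr) in Ey. apply IFF in Hyx.
      rewrite Ey. exact (wb_trans_l H _ _ _ (proj1 Hyx) W).
    + intro Hall. apply (WBin_L H hr). apply Hall. reflexivity. intros w hw; exact hw.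
  -
    intros p S s HS D Hs. destruct (sup_spec H S s D Hs) as [SA IB].
    split.
    + destruct D as [[z0 S0] D'].
      assert (E : forall z, S z -> lo z = lo z0).
      { intros z Sz. apply (left_eq hr). rewrite (HS z Sz), (HS z0 S0). reflexivity. }
      assert (SA' : is_sup le (loimg S) (lo z0)).
      { split. intros a [z [Sz <-]]. rewrite (E z Sz). apply (gh_refl H).
        intros u Hu. apply Hu. exists z0; split; [exact S0|reflexivity]. }
      rewrite <- (HS z0 S0). apply (left_eq hr).
      exact (sup_unique (gh_po H) _ _ _ SA SA').
    + intros q Tt t HT DT Ht Heq. apply (right_eq hr).
      destruct (sup_spec H Tt t DT Ht) as [_ IBT].
      apply (inf_unique (gh_po H) (hiimg S)); [|exact IB].
      eapply is_inf_ext; [|exact IBT].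
      intro b. split.
      * intros [z [Tz <-]]. destruct (proj2 (Heq (IX_right le hr z)) (ex_intro _ z (conj Tz eq_refl)))
          as [z' [Sz' E]]. exists z'. split; [exact Sz'| exact (proj1 (right_eq hr _ _) E)].
      * intros [z [Sz <-]]. destruct (proj1 (Heq (IX_right le hr z)) (ex_intro _ z (conj Sz eq_refl)))
          as [z' [Tz' E]]. exists z'. split; [exact Tz'| exact (proj1 (right_eq hr _ _) E)].
  -
    intros q S s HS D Hs. destruct (sup_spec H S s D Hs) as [SA IB].
    split.
    + destruct D as [[z0 S0] D'].
      assert (E : forall z, S z -> hi z = hi z0).
      { intros z Sz. apply (right_eq hr). rewrite (HS z Sz), (HS z0 S0). reflexivity. }
      assert (IB' : is_inf le (hiimg S) (hi z0)).
      { split. intros a [z [Sz <-]]. rewrite (E z Sz). apply (gh_refl H).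
        intros u Hu. apply Hu. exists z0; split; [exact S0|reflexivity]. }
      rewrite <- (HS z0 S0). apply (right_eq hr).
      exact (inf_unique (gh_po H) _ _ _ IB IB').
    + intros p Tt t HT DT Ht Heq. apply (left_eq hr).
      destruct (sup_spec H Tt t DT Ht) as [SAT _].
      apply (sup_unique (gh_po H) (loimg S)); [|exact SA].
      eapply is_sup_ext; [|exact SAT].
      intro b. split.
      * intros [z [Tz <-]]. destruct (proj2 (Heq (IX_left le hr z)) (ex_intro _ z (conj Tz eq_refl)))
          as [z' [Sz' E]]. exists z'. split; [exact Sz'| exact (proj1 (left_eq hr _ _) E)].
      * intros [z [Sz <-]]. destruct (proj1 (Heq (IX_left le hr z)) (ex_intro _ z (conj Sz eq_refl)))
          as [z' [Tz' E]]. exists z'. split; [exact Tz'| exact (proj1 (left_eq hr _ _) E)].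
  -
    intros x I U HU Hc.
    set (pt := fun z => mk le z z (gh_refl H z)).
    destruct (proj2 H (lo x) (hi x) I (fun i z => U i (pt z))) as [l Hl].
    + intros i z Hz. destruct (HU i) as [Uup Uin].
      destruct (Ap_dir H (pt z)) as [D Sp].
      destruct (Uin (Ap (pt z)) (pt z) D Sp Hz) as [w [[A B] Uw]].
      exists (lo w), (hi w). split. split; assumption.
      intros z' [K1 K2]. apply (Uup w). exact Uw. apply IFF. split; apply (wb_le H); assumption.
    + intros z [h1 h2]. apply Hc. split. apply (max_IX H); reflexivity.
      apply IFF. split; assumption.
    + exists l. intros y [My Hxy]. apply (max_IX H) in My. apply IFF in Hxy.
      destruct (Hl (lo y)) as [i [Hi Ui]].
      { split. exact (proj1 Hxy). rewrite My. exact (proj2 Hxy). }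
      exists i. split; [exact Hi|].
      replace y with (pt (lo y)). exact Ui. apply IX_eq; [reflexivity| exact My].
Qed.

Lemma arrow_part (X Y : Type) (leX : X -> X -> Prop) (leY : Y -> Y -> Prop)
          (hrX : forall a, leX a a) (hrY : forall a, leY a a)
          (f : X -> Y) (hf : monotone leX leY f) :
     globally_hyperbolic leX -> globally_hyperbolic leY ->
     interval_continuous leX leY f ->
     IN_morphism (IX_le leX) (IX_le leY) (IX_left leX hrX) (IX_right leX hrX)
                 (IX_left leY hrY) (IX_right leY hrY) (fbar leX leY f hf).
Proof.
  intros HX HY hc.
  assert (mono : forall x y, IX_le leX x y -> IX_le leY (fbar leX leY f hf x) (fbar leX leY f hf y)).
  { intros x y h. apply (IX_le_iff HX) in h. apply (IX_le_iff HY).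
    split; apply hf; [exact (proj1 h)| exact (proj2 h)]. }
  split; [|split; intro x; apply IX_eq; reflexivity].
  intros U [Uup Uin]. split.
  - intros x y Ux h. exact (Uup _ _ Ux (mono x y h)).
  - intros S s D Hs Us.
    set (S' := fun w => exists z, S z /\ fbar leX leY f hf z = w).
    assert (D' : directed (IX_le leY) S').
    { destruct D as [[z0 S0] D]. split. exists (fbar leX leY f hf z0), z0; split; [exact S0|reflexivity].
      intros w1 w2 [z1 [S1 <-]] [z2 [S2 <-]]. destruct (D z1 z2 S1 S2) as [z3 [S3 [H1 H2]]].
      exists (fbar leX leY f hf z3). split; [exists z3; split; [exact S3|reflexivity]|].
      split; apply mono; assumption. }
    destruct (sup_spec HX S s D Hs) as [SA IB].
    assert (SA' := f_sup HX HY f hf hc _ _ (loimg_dir HX S D) SA).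
    assert (IB' := f_inf HX HY f hf hc _ _ (hiimg_fil HX S D) IB).
    assert (Hsup : is_sup (IX_le leY) S' (fbar leX leY f hf s)).
    { replace (fbar leX leY f hf s) with (mk leY (f (lo s)) (f (hi s)) (hf _ _ (lohi s)))
        by (apply IX_eq; reflexivity).
      apply (sup_IX_of HY).
      - eapply is_sup_ext; [|exact SA']. intro y. split.
        + intros [a [[z [Sz <-]] <-]]. exists (fbar leX leY f hf z). split; [exists z; split; [exact Sz|reflexivity]|reflexivity].
        + intros [w [[z [Sz <-]] <-]]. exists (lo z). split; [exists z; split; [exact Sz|reflexivity]|reflexivity].
      - eapply is_inf_ext; [|exact IB']. intro y. split.
        + intros [a [[z [Sz <-]] <-]]. exists (fbar leX leY f hf z). split; [exists z; split; [exact Sz|reflexivity]|reflexivity].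
        + intros [w [[z [Sz <-]] <-]]. exists (hi z). split; [exists z; split; [exact Sz|reflexivity]|reflexivity]. }
    destruct (Uin S' _ D' Hsup Us) as [w [[z [Sz <-]] Uw]].
    exists z. split; assumption.
Qed.

Theorem mainTheorem14 :
  (* object part: I X is an interval domain *)
  (forall (X : Type) (le : X -> X -> Prop) (hr : forall a, le a a),
     globally_hyperbolic le ->
     interval_domain (IX_le le) (IX_left le hr) (IX_right le hr)) /\
  (* arrow part: fbar is an arrow of IN *)
  (forall (X Y : Type) (leX : X -> X -> Prop) (leY : Y -> Y -> Prop)
          (hrX : forall a, leX a a) (hrY : forall a, leY a a)
          (f : X -> Y) (hf : monotone leX leY f),
     globally_hyperbolic leX -> globally_hyperbolic leY ->
     interval_continuous leX leY f ->
     IN_morphism (IX_le leX) (IX_le leY) (IX_left leX hrX) (IX_right leX hrX)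
                 (IX_left leY hrY) (IX_right leY hrY) (fbar leX leY f hf)) /\
  (* identities are preserved *)
  (forall (X : Type) (le : X -> X -> Prop) (hid : monotone le le (fun a => a)),
     globally_hyperbolic le ->
     forall x : IX le, fbar le le (fun a => a) hid x = x) /\
  (* composition is preserved *)
  (forall (X Y Z : Type) (leX : X -> X -> Prop) (leY : Y -> Y -> Prop) (leZ : Z -> Z -> Prop)
          (f : X -> Y) (g : Y -> Z)
          (hf : monotone leX leY f) (hg : monotone leY leZ g)
          (hgf : monotone leX leZ (fun a => g (f a))),
     globally_hyperbolic leX -> globally_hyperbolic leY -> globally_hyperbolic leZ ->
     interval_continuous leX leY f -> interval_continuous leY leZ g ->
     forall x : IX leX,
       fbar leX leZ (fun a => g (f a)) hgf x = fbar leY leZ g hg (fbar leX leY f hf x)).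
Proof.
  split; [|split; [|split]].
  - intros X le hr H. exact (obj_part le hr H).
  - exact arrow_part.
  - intros X le hid H x. apply IX_eq; reflexivity.
  - intros. apply IX_eq; reflexivity.
Qed.
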